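(* Let $\hat{\boldsymbol\mu}$ be a location estimator, assigning to every $n\times d$ data matrix a vector in $\mathbb R^d$, which is orthogonally equivariant: for all $\boldsymbol v\in\mathbb R^d$, all $d\times d$ orthogonal matrices $\boldsymbol A$ and all $n\times d$ data matrices $\boldsymbol X$, $\hat{\boldsymbol\mu}(\boldsymbol 1_n\boldsymbol v^{\top}+\boldsymbol X\boldsymbol A)=\boldsymbol v+\boldsymbol A^{\top}\hat{\boldsymbol\mu}(\boldsymbol X)$. Then whenever all rows of a data matrix $\boldsymbol X$ lie in a lower-dimensional affine subspace of $\mathbb R^d$, $\hat{\boldsymbol\mu}(\boldsymbol X)$ lies in that subspace as well. Consequently, for every $n\times d$ data matrix $\boldsymbol X$, $\varepsilon^*_n(\hat{\boldsymbol\mu},\boldsymbol X)\leqslant \lceil n/d\rceil/n$.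
   Context: Rows of the $n\times d$ data matrix are the data points; $\boldsymbol 1_n$ is the $n\times1$ vector of ones. For an integer $m\ge0$, $\boldsymbol X^m$ denotes any matrix obtained from $\boldsymbol X$ by replacing at most $m$ cells in each column by arbitrary real values. The finite-sample cellwise breakdown value is $\varepsilon^*_n(\hat{\boldsymbol\mu},\boldsymbol X)=\min\{\tfrac{m}{n}:\ \sup_{\boldsymbol X^m}\|\hat{\boldsymbol\mu}(\boldsymbol X^m)-\hat{\boldsymbol\mu}(\boldsymbol X)\|=\infty\}$. *)

(* Defs.v *)
From HB Require Import structures.
From mathcomp Require Import all_boot all_order all_algebra.
From mathcomp Require Import boolp classical_sets reals.
Set Implicit Arguments. Unset Strict Implicit. Unset Printing Implicit Defensive.
Import Order.TTheory GRing.Theory Num.Theory.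
Local Open Scope ring_scope.
Local Open Scope classical_set_scope.

(* Data matrices are 'M[R]_(n, d) (rows = data points); location estimates
   are row vectors 'rV[R]_d (the transpose of the paper's column vectors). *)

Definition orthogonal_mx (R : realType) (d : nat) (A : 'M[R]_d) : Prop :=
  A *m A^T = 1%:M.

(* Orthogonal equivariance  mu(1_n v^T + X A) = v + A^T mu(X),
   written with row vectors: mu(1_n v + X A) = v + mu(X) A. *)
Definition orth_equivariant (R : realType) (n d : nat)
    (mu : 'M[R]_(n, d) -> 'rV[R]_d) : Prop :=
  forall (v : 'rV[R]_d) (A : 'M[R]_d) (X : 'M[R]_(n, d)),
    orthogonal_mx A ->
    mu ((const_mx 1 : 'cV[R]_n) *m v + X *m A) = v + mu X *m A.

Definition in_affine (R : realType) (d : nat) (a : 'rV[R]_d) (U : 'M[R]_d)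
    (x : 'rV[R]_d) : bool := (x - a <= U)%MS.

Definition enorm (R : realType) (d : nat) (x : 'rV[R]_d) : R :=
  Num.sqrt (\sum_(j < d) x 0 j ^+ 2).

Definition cell_contam (R : realType) (n d : nat) (m : nat)
    (X Y : 'M[R]_(n, d)) : bool :=
  [forall j : 'I_d, #|[set i : 'I_n | Y i j != X i j]| <= m]%N.

Definition breaks_down (R : realType) (n d : nat)
    (mu : 'M[R]_(n, d) -> 'rV[R]_d) (X : 'M[R]_(n, d)) (m : nat) : Prop :=
  forall M : R, exists Y : 'M[R]_(n, d),
    cell_contam m X Y /\ M < enorm (mu Y - mu X).

(* Finite-sample cellwise breakdown value: min { m/n : breaks_down m }
   (the set is nonempty and finite-valued, so the infimum is this minimum). *)
Definition cell_breakdown (R : realType) (n d : nat)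
    (mu : 'M[R]_(n, d) -> 'rV[R]_d) (X : 'M[R]_(n, d)) : R :=
  inf [set (m%:R / n%:R : R) | m in [set m : nat | breaks_down mu X m]].

(* Main.v *)
Require Import Defs.
From HB Require Import structures.
From mathcomp Require Import all_boot all_order all_algebra.
From mathcomp Require Import boolp classical_sets reals ring lra zify.
Import Order.TTheory GRing.Theory Num.Theory.
Local Open Scope ring_scope.

Section P1.
Variables (R : realType) (d : nat).

Definition hh (w : 'rV[R]_d) : 'M[R]_d :=
  1%:M - (2 / (w *m w^T) 0 0) *: (w^T *m w).

Lemma hh_orth (w : 'rV[R]_d) : w != 0 -> orthogonal_mx (hh w).
Proof.
move=> w0; rewrite /orthogonal_mx /hh.
set s := (w *m w^T) 0 0.
have s0 : s != 0.
  apply: contra w0 => /eqP s0; apply/eqP/rowP => k; rewrite mxE.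
  move: s0; rewrite /s mxE => /psumr_eq0P H.
  have /(_ k isT) : forall i : 'I_d, true -> w 0 i * w^T i 0 = 0.
    by apply: H => i _; rewrite mxE -expr2 sqr_ge0.
  by rewrite mxE => /eqP; rewrite mulf_eq0 orbb => /eqP.
have PP : (w^T *m w) *m (w^T *m w) = s *: (w^T *m w).
  by rewrite mulmxA -(mulmxA w^T) [w *m w^T]mx11_scalar mul_mx_scalar -scalemxAl.
have T : (w^T *m w)^T = w^T *m w by rewrite trmx_mul trmxK.
have E : ((1%:M - (2 / s) *: (w^T *m w)) : 'M[R]_d)^T = 1%:M - (2 / s) *: (w^T *m w).
  by rewrite linearB /= linearZ /= T tr_scalar_mx.
rewrite E.
rewrite mulmxBl !mulmxBr !mul1mx !mulmx1.
rewrite -!scalemxAl -!scalemxAr PP scalerA.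
rewrite scalerA; apply/matrixP => i j; rewrite !mxE.
set p := (w^T *m w) i j.
by field.
Qed.

Lemma hh_fix (w z : 'rV[R]_d) : z *m w^T = 0 -> z *m hh w = z.
Proof.
by move=> zw; rewrite /hh mulmxBr mulmx1 -scalemxAr mulmxA zw mul0mx scaler0 subr0.
Qed.

Lemma hh_orth2 (w y : 'rV[R]_d) : y *m hh w = y -> y *m w^T = 0.
Proof.
have [->|w0] := eqVneq w 0; first by rewrite trmx0 mulmx0.
set s := (w *m w^T) 0 0.
have s0 : s != 0.
  apply: contra w0 => /eqP s0; apply/eqP/rowP => k; rewrite mxE.
  move: s0; rewrite /s mxE => /psumr_eq0P H.
  have /(_ k isT) : forall i : 'I_d, true -> w 0 i * w^T i 0 = 0.
    by apply: H => i _; rewrite mxE -expr2 sqr_ge0.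
  by rewrite mxE => /eqP; rewrite mulf_eq0 orbb => /eqP.
rewrite /hh mulmxBr mulmx1 -scalemxAr mulmxA => /eqP.
rewrite subr_eq addrC -subr_eq subrr eq_sym scaler_eq0 mulf_eq0 invr_eq0 -/s (negbTE s0).
rewrite orbF pnatr_eq0 /= [y *m w^T]mx11_scalar mul_scalar_mx scaler_eq0 (negbTE w0) orbF.
by move=> /eqP ->; apply/matrixP => i j; rewrite !mxE mul0rn.
Qed.

Lemma part1 n (mu : 'M[R]_(n, d) -> 'rV[R]_d) (Hmu : orth_equivariant mu)
  (X : 'M[R]_(n, d)) (a : 'rV[R]_d) (U : 'M[R]_d) :
  (forall i : 'I_n, in_affine a U (row i X)) -> in_affine a U (mu X).
Proof.
move=> HX.
have Hw : forall w : 'rV_d, w *m U^T = 0 -> (mu X - a) *m w^T = 0.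
  move=> w wU.
  have [->|w0] := eqVneq w 0; first by rewrite trmx0 mulmx0.
  have orth := @hh_orth w w0.
  set A := hh w.
  have EX : (const_mx 1 : 'cV[R]_n) *m (a - a *m A) + X *m A = X.
    apply/row_matrixP => i; rewrite linearD /= !row_mul row_const.
    have -> : (const_mx 1 : 'M[R]_(1,1)) *m (a - a *m A) = a - a *m A.
      by apply/rowP => j; rewrite !mxE big_ord1 !mxE mul1r.
    have zw : (row i X - a) *m w^T = 0.
      have /submxP [D ->] := HX i.
      by rewrite -mulmxA -[U *m w^T]trmxK trmx_mul trmxK wU trmx0 mulmx0.
    have := @hh_fix _ _ zw; rewrite -/A mulmxBl => /eqP; rewrite subr_eq => /eqP ->.
    by apply/rowP => j; rewrite !mxE; ring.
  have := Hmu (a - a *m A) A X orth; rewrite EX => E.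
  apply: hh_orth2; rewrite -/A mulmxBl {2}E.
  by apply/rowP => j; rewrite !mxE; ring.
set y := mu X - a.
rewrite /in_affine -/y.
set K := kermx U^T.
have yK : y *m K^T = 0.
  suff : K *m y^T = 0 by move=> e; rewrite -[y]trmxK -trmx_mul e trmx0.
  apply/row_matrixP => i; rewrite row_mul row0.
  by rewrite -[row i K]trmxK -[y^T]trmxK -trmx_mul trmxK Hw ?trmx0 // -row_mul mulmx_ker row0.
have sUk : (U <= kermx K^T)%MS.
  by apply/sub_kermxP; rewrite -[U]trmxK -trmx_mul mulmx_ker trmx0.
have rk : \rank (kermx K^T) = \rank U.
  rewrite mxrank_ker mxrank_tr mxrank_ker mxrank_tr subKn //.
  exact: rank_leq_col.
have sk : (kermx K^T <= U)%MS.
  by case: (mxrank_leqif_sup sUk) => _ <-; rewrite rk.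
apply: submx_trans sk; exact/sub_kermxP.
Qed.
End P1.

Lemma norm_ge (R : realType) d (z : 'rV[R]_d) (j : 'I_d) : `|z 0 j| <= enorm z.
Proof.
rewrite /enorm -sqrtr_sqr ler_sqrt; last by apply: sumr_ge0 => k _; exact: sqr_ge0.
by rewrite (bigD1 j) //= lerDl; apply: sumr_ge0 => k _; exact: sqr_ge0.
Qed.

Lemma card_fiber n m d (hm : (0 < m)%N) (g : 'I_n -> 'I_d)
  (Hg : forall i, nat_of_ord (g i) = (i %/ m)%N) (j : 'I_d) :
  (#|[set i | g i == j]| <= m)%N.
Proof.
have lt : forall i : 'I_n, (i %% m < m)%N by move=> i; rewrite ltn_mod.
pose f (i : 'I_n) : 'I_m := Ordinal (lt i).
rewrite -(card_in_imset (f := f)); first by apply: leq_trans (max_card _) _; rewrite card_ord.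
move=> i i'; rewrite !inE => /eqP gi /eqP gi' [] e.
apply/val_inj => /=; rewrite (divn_eq i m) (divn_eq i' m) e -!Hg gi gi' //.
Qed.

Lemma part2 (R : realType) n d (hn : (0 < n)%N) (hd : (0 < d)%N)
  (mu : 'M[R]_(n, d) -> 'rV[R]_d) (Hmu : orth_equivariant mu) (X : 'M[R]_(n, d)) :
  breaks_down mu X ((n + d - 1) %/ d).
Proof.
set m := ((n + d - 1) %/ d)%N.
have hm : (0 < m)%N by rewrite /m; lia.
have lt : forall i : 'I_n, (i %/ m < d)%N.
  move=> i; rewrite ltn_divLR //; have := ltn_ord i; rewrite /m; lia.
pose g (i : 'I_n) : 'I_d := Ordinal (lt i).
move=> M.
pose b := \sum_j (mu X) 0 j + d%:R * (`|M| + 1).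
pose Y : 'M[R]_(n, d) := \matrix_(i, j) if g i == j then b - \sum_(k | k != j) X i k else X i j.
exists Y; split.
  apply/forallP => j; apply: leq_trans (@card_fiber n m d hm g (fun i => erefl) j).
  apply: subset_leq_card; apply/fintype.subsetP => i; rewrite !inE /= mxE.
  by case: (g i == j); rewrite ?eqxx.
pose C : 'M[R]_(d, 1) := const_mx 1.
pose a : 'rV[R]_d := (b / d%:R) *: const_mx 1.
have HC : forall v : 'rV[R]_d, (v - a <= kermx C)%MS = (\sum_j v 0 j == b).
  move=> v; rewrite sub_kermx; apply/eqP/eqP.
    move/matrixP => /(_ 0 0); rewrite !mxE (eq_bigr (fun i => v 0 i - b / d%:R)); last first.
      by move=> l _; rewrite !mxE !mulr1.
    rewrite (sumrB _ _ (fun i => v 0 i) (fun _ => b / d%:R)) sumr_const card_ord => /eqP; rewrite subr_eq0 => /eqP ->.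
    rewrite -mulr_natr; field; by rewrite pnatr_eq0 -lt0n.
  move=> e; apply/matrixP => i k; rewrite !mxE !ord1 (eq_bigr (fun i => v 0 i - b / d%:R)); last first.
    by move=> l _; rewrite !mxE !mulr1.
  rewrite (sumrB _ _ (fun i => v 0 i) (fun _ => b / d%:R)) sumr_const card_ord e.
  rewrite -mulr_natr; field; by rewrite pnatr_eq0 -lt0n.
have HY : \sum_j (mu Y) 0 j = b.
  apply/eqP; rewrite -HC; apply: part1 => // i; rewrite /in_affine HC.
  rewrite (bigD1 (g i)) //= !mxE eqxx.
  rewrite (eq_bigr (fun k => X i k)); last first.
    by move=> k kg; rewrite !mxE eq_sym (negbTE kg).
  by rewrite subrK.
rewrite ltNge; apply/negP => Hle.
have Hz : forall j, (mu Y - mu X) 0 j <= `|M|.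
  move=> j; apply: (le_trans (ler_norm _)); apply: (le_trans (@norm_ge _ _ _ j)).
  apply: (le_trans Hle); exact: ler_norm.
have : \sum_j (mu Y - mu X) 0 j <= \sum_(j < d) `|M| by apply: ler_sum => j _.
rewrite sumr_const card_ord.
under eq_bigr do rewrite !mxE.
rewrite sumrB HY /b addrC addKr -mulr_natl.
have : (0 < d%:R :> R) by rewrite ltr0n.
lra.
Qed.

Theorem corollary1 (R : realType) (n d : nat) (hn : (0 < n)%N) (hd : (0 < d)%N)
    (mu : 'M[R]_(n, d) -> 'rV[R]_d) (Hmu : orth_equivariant mu) :
  (forall (X : 'M[R]_(n, d)) (a : 'rV[R]_d) (U : 'M[R]_d),
     (\rank U < d)%N ->
     (forall i : 'I_n, in_affine a U (row i X)) ->
     in_affine a U (mu X))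
  /\
  (forall X : 'M[R]_(n, d),
     cell_breakdown mu X <= (divn (n + d - 1) d)%:R / n%:R).
Proof.
split; first by move=> X a U _; exact: part1.
move=> X; rewrite /cell_breakdown.
have hl : has_lbound [set (m%:R / n%:R : R) | m in [set m : nat | breaks_down mu X m]]%classic.
  by exists 0 => _ [k _ <-]; rewrite divr_ge0 ?ler0n.
apply: (ge_inf hl); exists ((n + d - 1) %/ d)%N => //.
exact: part2.
Qed.
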